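(* If $C^1$ and $C^2$ are non-empty cliques of $G$, then $|C^1|<|C^2|$ if and only if $f(\mathbf{x}(C^1))<f(\mathbf{x}(C^2))$.
   Context: Let $G=(\mathcal{V},\mathcal{E})$ be a simple undirected graph on vertex set $\mathcal{V}=\{1,\dots,n\}$ with adjacency matrix $\mathbf{A}=(a_{ij})$ ($a_{ij}=1$ if $(i,j)\in\mathcal{E}$, else $0$; $a_{ii}=0$). A clique is a subset $C\subseteq\mathcal{V}$ with $(i,j)\in\mathcal{E}$ for all distinct $i,j\in C$. Let $\Delta=\{\mathbf{x}\in\mathbb{R}^n:\mathbf{0}\le\mathbf{x}\le\mathbf{1},\ \mathbf{1}^{\mathsf T}\mathbf{x}=1\}$. For a non-empty clique $C$, $\mathbf{x}(C)\in\Delta$ has $x(C)_i=1/|C|$ for $i\in C$ and $0$ otherwise. For $\mathbf{x}\in\Delta$, $\mathcal{P}(\mathbf{x})$ is the set of vectors in $\Delta$ obtained by permuting the coordinates of $\mathbf{x}$. Let $\Phi:X\to\mathbb{R}$ be twice continuously differentiable on an open set $X\supset\Delta$, satisfying for every $\mathbf{x}\in\Delta$: (C1) $\nabla^2\Phi(\mathbf{x})$ is positive semidefinite; (C2) $\|\nabla^2\Phi(\mathbf{x})\|_2<2$; (C3) $\Phi$ is constant on $\mathcal{P}(\mathbf{x})$. Define $f(\mathbf{x})=\mathbf{x}^{\mathsf T}\mathbf{A}\mathbf{x}+\Phi(\mathbf{x})$. *)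

(* Defs.v *)
From mathcomp Require Import all_boot all_order all_algebra all_fingroup.
From mathcomp Require Import all_classical all_reals all_analysis.
Import Order.TTheory GRing.Theory Num.Theory.
Import numFieldNormedType.Exports.
Set Implicit Arguments. Unset Strict Implicit. Unset Printing Implicit Defensive.
Local Open Scope ring_scope.
Local Open Scope classical_set_scope.

Section Defs.
Variables (R : realType) (n : nat).

Definition simple_graph (adj : rel 'I_n) : Prop :=
  (forall i j, adj i j = adj j i) /\ (forall i, ~~ adj i i).

Definition adjmx (adj : rel 'I_n) : 'M[R]_n := \matrix_(i, j) (adj i j)%:R.

Definition is_clique (adj : rel 'I_n) (C : {set 'I_n}) : Prop :=
  forall i j, i \in C -> j \in C -> i != j -> adj i j.

Definition simplex : set 'rV[R]_n :=
  [set x | (forall i, 0 <= x 0 i <= 1) /\ \sum_i x 0 i = 1].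

Definition charvec (C : {set 'I_n}) : 'rV[R]_n :=
  \row_i (if i \in C then (#|C|%:R)^-1 else 0).

Definition ebasis (i : 'I_n) : 'rV[R]_n := delta_mx 0 i.

Definition C2_on (Phi : 'rV[R]_n -> R) (X : set 'rV[R]_n) : Prop :=
  {within X, continuous Phi} /\
  (forall i, (forall x, X x -> derivable Phi x (ebasis i)) /\
             {within X, continuous ('D_(ebasis i) Phi)}) /\
  (forall i j, (forall x, X x -> derivable ('D_(ebasis j) Phi) x (ebasis i)) /\
               {within X, continuous ('D_(ebasis i) ('D_(ebasis j) Phi))}).

Definition hessian (Phi : 'rV[R]_n -> R) (x : 'rV[R]_n) : 'M[R]_n :=
  \matrix_(i, j) ('D_(ebasis i) ('D_(ebasis j) Phi)) x.

Definition psd (M : 'M[R]_n) : Prop :=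
  forall v : 'rV[R]_n, 0 <= (v *m M *m v^T) 0 0.

Definition sqnorm2 (v : 'rV[R]_n) : R := \sum_i v 0 i ^+ 2.

(* ||M||_2 < c : the operator norm induced by the Euclidean norm,
   sup_{v <> 0} ||M v||_2 / ||v||_2, is strictly less than c
   (i.e. some c' < c bounds the ratio) *)
Definition spectral_norm_lt (M : 'M[R]_n) (c : R) : Prop :=
  exists2 c', c' < c & forall v : 'cV[R]_n,
    Num.sqrt (sqnorm2 (M *m v)^T) <= c' * Num.sqrt (sqnorm2 v^T).

Definition permvec (s : {perm 'I_n}) (x : 'rV[R]_n) : 'rV[R]_n := \row_i x 0 (s i).

Definition fobj (adj : rel 'I_n) (Phi : 'rV[R]_n -> R) (x : 'rV[R]_n) : R :=
  (x *m adjmx adj *m x^T) 0 0 + Phi x.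

End Defs.

(* Main.v *)
Require Import Defs.
From mathcomp Require Import all_boot all_order all_algebra all_fingroup.
From mathcomp Require Import all_classical all_reals all_analysis.
From mathcomp Require Import ring lra.
Import Order.TTheory GRing.Theory Num.Theory.
Import numFieldNormedType.Exports.
Local Open Scope ring_scope.
Local Open Scope classical_set_scope.
Set Implicit Arguments. Unset Strict Implicit. Unset Printing Implicit Defensive.
Section Lib.
Context {R : realType} {n : nat}.
Notation V := 'rV[R]_n.

Lemma is_derive_quad (t S : R) : is_derive t 1 (fun s : R => S * (s * s)) (S * (t + t)).
Proof.
have H : is_derive t 1 (S \*: (id * id : R -> R)) (S *: (t *: 1 + t *: 1)).
  by apply: is_deriveZ; apply: is_deriveM; apply: is_derive_id.
by move: H; rewrite !scaler1.
Qed.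

Lemma taylor1 (f f1 f2 : R -> R) (S : R) :
 (forall t : R, 0 <= t <= 1 -> is_derive t 1 f (f1 t)) ->
 (forall t : R, 0 <= t <= 1 -> is_derive t 1 f1 (f2 t)) ->
 (forall t : R, 0 <= t <= 1 -> f2 t < 2 * S) ->
 f 1 - f 0 - f1 0 < S.
Proof.
move=> H1 H2 H3.
pose psi := fun t => f t - S * (t * t).
pose psi1 := fun t => f1 t - S * (t + t).
pose psi2 := fun t => f2 t - S * 2.
have D1 (t : R) : 0 <= t <= 1 -> is_derive t 1 psi (psi1 t).
  move=> /H1 h; exact: (is_deriveB h (is_derive_quad t S)).
have D2 (t : R) : 0 <= t <= 1 -> is_derive t 1 psi1 (psi2 t).
  move=> /H2 h.
  have Q : is_derive t 1 (S \*: (id + id : R -> R)) (S *: (1 + 1)).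
    apply: is_deriveZ; apply: is_deriveD; exact: is_derive_id.
  exact: (is_deriveB h Q).
have [c c01 Ec] := @MVT R psi psi1 0 1 ltr01
   (fun x hx => D1 x ltac:(move: hx; rewrite in_itv /= => /andP[a b]; rewrite !ltW //))
   ltac:(apply: derivable_within_continuous => x; rewrite in_itv /= => hx; by have [] := D1 x hx).
move: c01; rewrite in_itv /= => /andP[c0 c1].
have [xi xic Exi] := @MVT R psi1 psi2 0 c c0
   (fun x hx => D2 x ltac:(move: hx; rewrite in_itv /= => /andP[a b]; apply/andP; split; lra))
   ltac:(apply: derivable_within_continuous => x; rewrite in_itv /= => /andP[a b];
         by have [] := D2 x ltac:(apply/andP; split; lra)).
move: xic; rewrite in_itv /= => /andP[x0 x1].
have h3 := H3 xi ltac:(apply/andP; split; lra).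
have : psi2 xi * c < 0 by rewrite pmulr_llt0 // /psi2; lra.
move: Ec Exi; rewrite /psi /psi1 /psi2 !subr0 !mulr1 !mul0r !mulr0 !subr0 addr0 => Ec Exi.
lra.
Qed.

Lemma derive_line (g : V -> R) (y w : V) (t : R) :
  derivable g (y + t *: w) w ->
  is_derive t 1 (fun s => g (y + s *: w)) ('D_w g (y + t *: w)).
Proof.
move=> dg.
have E : (fun h : R => h^-1 *: (((fun s => g (y + s *: w)) \o shift t) (h *: 1) - g (y + t *: w)))
   = (fun h : R => h^-1 *: ((g \o shift (y + t *: w)) (h *: w) - g (y + t *: w))).
  apply/funext => h /=; congr (_ *: (g _ - _)).
  by rewrite scaler1 scalerDl addrCA addrA.
split; first by rewrite /derivable E.
by rewrite /derive E.
Qed.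

Lemma mvt_dir (g : V -> R) (P : set V) (y e : V) (c : R) :
  (forall s, `|s| <= `|c| -> P (y + s *: e)) ->
  (forall z, P z -> derivable g z e) ->
  exists s, `|s| <= `|c| /\ g (y + c *: e) - g y = c * 'D_e g (y + s *: e).
Proof.
move=> HP Hd.
have D (s : R) : `|s| <= `|c| -> is_derive s 1 (fun s => g (y + s *: e)) ('D_e g (y + s *: e)).
  by move=> hs; apply: derive_line; exact: Hd (HP _ hs).
case: (leP 0 c) => c0.
- have [|x0c|s] := @MVT_segment R (fun s => g (y + s *: e)) (fun s => 'D_e g (y + s *: e)) 0 c c0.
  + move=> x; rewrite in_itv /= => /andP[h1 h2]; apply: D.
    by rewrite !ger0_norm //; lra.
  + apply: derivable_within_continuous => x; rewrite in_itv /= => /andP[h1 h2].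
    have [] := D x; last by []. by rewrite !ger0_norm //; lra.
  + rewrite in_itv /= => /andP[h1 h2] E; exists s; split.
      by rewrite !ger0_norm //; lra.
    by move: E; rewrite scale0r addr0 subr0 mulrC.
- have c0' : c <= 0 by lra.
  have [|x0c|s] := @MVT_segment R (fun s => g (y + s *: e)) (fun s => 'D_e g (y + s *: e)) c 0 c0'.
  + move=> x; rewrite in_itv /= => /andP[h1 h2]; apply: D.
    by rewrite !ler0_norm //; lra.
  + apply: derivable_within_continuous => x; rewrite in_itv /= => /andP[h1 h2].
    have [] := D x; last by []. by rewrite !ler0_norm //; lra.
  + rewrite in_itv /= => /andP[h1 h2] E; exists s; split.
      by rewrite !ler0_norm //; lra.
    move: E; rewrite scale0r addr0 sub0r => E.
    by rewrite -opprB E mulrN mulrC opprK.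
Qed.

Lemma ball_rV (a z : V) (d : R) : 0 < d -> (forall i, `|a 0 i - z 0 i| < d) -> ball a d z.
Proof. move=> d0 H; split => // i j; rewrite (ord1 i); exact: H. Qed.

Definition Pk (k : nat) (v : V) : V := \row_i (if (i < k)%N then v 0 i else 0).

Lemma Pk0 v : Pk 0 v = 0.
Proof. by apply/rowP => i; rewrite !mxE. Qed.

Lemma Pkn v : Pk n v = v.
Proof. by apply/rowP => i; rewrite !mxE ltn_ord. Qed.

Lemma PkS (k : 'I_n) v : Pk k.+1 v = Pk k v + v 0 k *: ebasis R k.
Proof.
apply/rowP => i; rewrite !mxE ltnS leq_eqVlt eqxx /=.
case: (eqVneq i k) => [->|ik]; first by rewrite ltnn eqxx mulr1 add0r.
have : (nat_of_ord i == nat_of_ord k) = false by apply/negbTE.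
by move=> ->; rewrite /= mulr0 addr0.
Qed.

Lemma telescope_g (g : V -> R) a v h :
  g (a + h *: v) - g a = \sum_(k < n) (g (a + h *: Pk k.+1 v) - g (a + h *: Pk k v)).
Proof.
rewrite -(big_mkord xpredT (fun k => g (a + h *: Pk k.+1 v) - g (a + h *: Pk k v))).
by rewrite telescope_sumr // Pkn Pk0 scaler0 addr0.
Qed.

Lemma partials_derive (g : V -> R) (X : set V) (a v : V) :
  open X -> X a ->
  (forall x, X x -> forall i, derivable g x (ebasis R i)) ->
  (forall i, {within X, continuous ('D_(ebasis R i) g)}) ->
  is_derive a v g (\sum_i v 0 i * 'D_(ebasis R i) g a).
Proof.
move=> oX Xa Hd Hc.
set L := \sum_i _.
suff C : (fun h : R => h^-1 *: ((g \o shift a) (h *: v) - g a)) @ 0^' --> L.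
  split; first by apply/cvg_ex; exists L.
  exact: cvg_lim.
apply/cvgrPdist_le => eps eps0.
set M := \sum_i `|v 0 i| + 1.
have M0 : 0 < M by rewrite /M ltr_pwDr // sumr_ge0.
have vM i : `|v 0 i| <= M.
  rewrite /M (bigD1 i) //= -addrA lerDl addr_ge0 //; exact: sumr_ge0.
set eps' := eps / M.
have eps'0 : 0 < eps' by rewrite divr_gt0.
have [d1 d1p Hb1] : exists2 d, 0 < d & forall z, ball a d z ->
    forall i, `|'D_(ebasis R i) g a - 'D_(ebasis R i) g z| < eps'.
  have : \forall z \near a, forall i, `|'D_(ebasis R i) g a - 'D_(ebasis R i) g z| < eps'.
    have Hi : forall i, \forall z \near a, `|'D_(ebasis R i) g a - 'D_(ebasis R i) g z| < eps'.
      2: by apply: filter_forall Hi.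
    move=> i; have := Hc i; rewrite continuous_open_subspace // => /(_ a).
    have aX : a \in X by rewrite inE.
    move=> /(_ aX) ca.
    exact: ((cvgrPdist_lt _ _).1 ca eps' eps'0).
  by move/nbhs_ballP => [d dp Hd']; exists d.
have [d2 d2p Hb2] : exists2 d, 0 < d & forall z, ball a d z -> X z.
  have : nbhs a X by move: oX; rewrite openE => /(_ a Xa).
  by move/nbhs_ballP => [d dp Hd']; exists d.
set d := Num.min d1 d2.
have dp : 0 < d by rewrite lt_min d1p d2p.
have Bd z : ball a d z -> ball a d1 z /\ X z.
  move=> bz; split; first by apply: le_ball bz; rewrite ge_min lexx.
  by apply: Hb2; apply: le_ball bz; rewrite ge_min lexx orbT.
rewrite near_withinE; apply/nbhs_ballP; exists (d / M); first by apply: divr_gt0.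
move=> h /= hb hnz.
have hM : `|h| * M < d.
  move: hb; rewrite -ball_normE /= sub0r normrN => hb.
  by rewrite -ltr_pdivlMr.
have term (k : 'I_n) :
   `|(g (a + h *: Pk k.+1 v) - g (a + h *: Pk k v)) - h * v 0 k * 'D_(ebasis R k) g a|
     <= `|h| * `|v 0 k| * eps'.
  set y := a + h *: Pk k v.
  have Ey : a + h *: Pk k.+1 v = y + (h * v 0 k) *: ebasis R k.
    by rewrite PkS scalerDr addrA scalerA.
  have Pin (s : R) : `|s| <= `|h * v 0 k| -> ball a d (y + s *: ebasis R k).
    move=> hs; apply: ball_rV => // i.
    rewrite /y !mxE.
    rewrite -addrA opprD addrA subrr add0r normrN; apply: le_lt_trans hM.
    case: (eqVneq k i) => [<-|ki].
      by rewrite ltnn mulr0 add0r /= mulr1; apply: (le_trans hs); rewrite normrM ler_wpM2l.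
    rewrite /= mulr0 addr0.
    case: ifP => _; last by rewrite mulr0 normr0 mulr_ge0 // ltW.
    by rewrite normrM ler_wpM2l.
  have [s [hs Es]] := @mvt_dir g (ball a d) y (ebasis R k) (h * v 0 k) Pin
     (fun z bz => Hd z (Bd z bz).2 k).
  rewrite Ey Es -mulrBr !normrM ler_wpM2l ?mulr_ge0 //.
  rewrite distrC; apply: ltW; apply: Hb1; exact: (Bd _ (Pin s hs)).1.
have Eq : L - h^-1 *: ((g \o shift a) (h *: v) - g a)
   = - h^-1 * \sum_(k < n) ((g (a + h *: Pk k.+1 v) - g (a + h *: Pk k v)) - h * v 0 k * 'D_(ebasis R k) g a).
  rewrite /= sumrB -telescope_g mulrBr !mulNr opprK [RHS]addrC [h *: v + a]addrC.
  congr (_ - _).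
  rewrite /L mulr_sumr; apply: eq_bigr => k _.
  by rewrite mulrA mulrA mulVf // mul1r.
rewrite Eq normrM normrN normfV ler_pdivrMl ?normr_gt0 //.
apply: (le_trans (ler_norm_sum _ _ _)).
apply: (le_trans (ler_sum _ (fun k _ => term k))).
rewrite -mulr_suml -mulr_sumr -mulrA ler_wpM2l //.
rewrite /eps' mulrA ler_pdivrMr // mulrC ler_wpM2l ?ltW //.
by rewrite /M ltrDl.
Qed.
Lemma line_derive (g : V -> R) (X : set V) (p d : V) (t : R) :
  open X -> X (p + t *: d) ->
  (forall x, X x -> forall i, derivable g x (ebasis R i)) ->
  (forall i, {within X, continuous ('D_(ebasis R i) g)}) ->
  is_derive t 1 (fun s => g (p + s *: d)) (\sum_i d 0 i * 'D_(ebasis R i) g (p + t *: d)).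
Proof.
move=> oX Xp Hd Hc.
have [dv Dv] := partials_derive d oX Xp Hd Hc.
by have := derive_line dv; rewrite Dv.
Qed.

Lemma Phi_taylor (Phi : V -> R) (X : set V) (p d : V) :
  open X -> C2_on Phi X ->
  (forall t : R, 0 <= t <= 1 -> X (p + t *: d)) ->
  (forall t : R, 0 <= t <= 1 ->
     \sum_i d 0 i * \sum_j d 0 j * 'D_(ebasis R j) ('D_(ebasis R i) Phi) (p + t *: d)
       < 2 * sqnorm2 d) ->
  Phi (p + d) - Phi p - \sum_i d 0 i * 'D_(ebasis R i) Phi p < sqnorm2 d.
Proof.
move=> oX [Hc0 [H1 H2]] Hseg Hbd.
have := @taylor1 (fun s => Phi (p + s *: d))
  (fun s => \sum_i d 0 i * 'D_(ebasis R i) Phi (p + s *: d))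
  (fun s => \sum_i d 0 i * \sum_j d 0 j * 'D_(ebasis R j) ('D_(ebasis R i) Phi) (p + s *: d))
  (sqnorm2 d).
rewrite scale1r scale0r addr0; apply => // t /Hseg Xt.
- apply: (@line_derive Phi X p d t oX Xt); [move=> x Xx i; exact: (H1 i).1 x Xx | move=> i; exact: (H1 i).2].
- have -> : (fun s => \sum_i d 0 i * 'D_(ebasis R i) Phi (p + s *: d))
          = \sum_i (fun s => d 0 i * 'D_(ebasis R i) Phi (p + s *: d)).
    by rewrite fct_sumE.
  apply: is_derive_sum => i.
  have := @line_derive ('D_(ebasis R i) Phi) X p d t oX Xt
     (fun x Xx j => (H2 j i).1 x Xx) (fun j => (H2 j i).2).
  move=> h; exact: (is_deriveZ (d 0 i) h).
Qed.
Lemma hess_bound (H : 'M[R]_n) (d : V) : spectral_norm_lt H 2 -> 0 < sqnorm2 d ->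
  \sum_i d 0 i * \sum_j d 0 j * H j i < 2 * sqnorm2 d.
Proof.
move=> [c c2 Hc] S0.
have := Hc d^T; rewrite trmxK.
set W := sqnorm2 _; set S := sqnorm2 d => hW.
have W0 : 0 <= W by rewrite /W /sqnorm2 sumr_ge0 // => i _; exact: sqr_ge0.
have sS : 0 < Num.sqrt S by rewrite sqrtr_gt0.
have c0 : 0 <= c.
  have := le_trans (sqrtr_ge0 W) hW; by rewrite pmulr_lge0.
have hW2 : W <= c ^+ 2 * S.
  have := ler_pM (sqrtr_ge0 W) (sqrtr_ge0 W) hW hW.
  by rewrite -expr2 sqr_sqrtr // mulrACA -expr2 -expr2 sqr_sqrtr // ?ltW.
have E : \sum_i d 0 i * \sum_j d 0 j * H j i = \sum_j d 0 j * (H *m d^T) j 0.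
  rewrite (eq_bigr (fun i => \sum_j d 0 i * (d 0 j * H j i))); last by move=> i _; rewrite mulr_sumr.
  rewrite exchange_big /=; apply: eq_bigr => j _; rewrite !mxE mulr_sumr.
  by apply: eq_bigr => i _; rewrite !mxE; ring.
rewrite E.
have L1 : \sum_j d 0 j * (H *m d^T) j 0 <= S + W / 4.
  have key (a b : R) : a * b <= a ^+ 2 + b ^+ 2 / 4 by have := sqr_ge0 (2 * a - b); nra.
  rewrite /S /W /sqnorm2 mulr_suml -big_split /=; apply: ler_sum => j _.
  have -> : (H *m d^T)^T 0 j = (H *m d^T) j 0 by rewrite mxE.
  exact: key.
have : c ^+ 2 < 4 by nra.
move=> c4; have h : 0 < (4 - c ^+ 2) * S by apply: mulr_gt0 => //; rewrite subr_gt0.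
nra.
Qed.

Lemma charvecE (C : {set 'I_n}) i :
  charvec R C 0 i = if i \in C then (#|C|%:R)^-1 else 0.
Proof. by rewrite mxE. Qed.

Lemma sum_charvec (C : {set 'I_n}) : C != finset.set0 -> \sum_i charvec R C 0 i = 1.
Proof.
move=> C0; under eq_bigr do rewrite charvecE.
rewrite -big_mkcond /= sumr_const -(mulr_natr (#|C|%:R^-1)) mulVf //.
by rewrite pnatr_eq0 -lt0n card_gt0.
Qed.

Lemma charvec_simplex (C : {set 'I_n}) : C != finset.set0 -> simplex (charvec R C).
Proof.
move=> C0; split; last exact: sum_charvec.
move=> i; rewrite charvecE; case: ifP => _; last by rewrite lexx ler01.
have k1 : 1 <= (#|C|%:R : R) by rewrite ler1n card_gt0.
apply/andP; split; first by rewrite invr_ge0 (le_trans ler01).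
by rewrite invf_le1 // (lt_le_trans ltr01).
Qed.

Lemma simplex_seg (x y : V) (t : R) : simplex x -> simplex y -> 0 <= t <= 1 ->
  simplex (x + t *: (y - x)).
Proof.
move=> [hx sx] [hy sy] /andP[t0 t1]; split.
  move=> i; rewrite !mxE; have /andP[a b] := hx i; have /andP[c d] := hy i.
  apply/andP; split; nra.
under eq_bigr do rewrite !mxE.
by rewrite big_split /= -mulr_sumr sumrB sx sy subrr mulr0 addr0.
Qed.

Lemma sum_in_neq (D : {set 'I_n}) j (c : R) : j \in D ->
  \sum_(i in D | i != j) c = (#|D|%:R - 1) * c.
Proof.
move=> jD; have E : \sum_(i in D) c = c *+ #|D| by rewrite sumr_const.
move: E; rewrite (bigD1 j) //= => E.
by rewrite mulrBl mul1r mulr_natl -E addrAC subrr add0r.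
Qed.

Lemma sum_ifD (D : {set 'I_n}) j (c : R) : j \in D ->
  \sum_(i | i != j) (if i \in D then c else 0) = (#|D|%:R - 1) * c.
Proof.
move=> jD; rewrite -(sum_in_neq c jD) [RHS]big_mkcond /= [LHS]big_mkcond /=; apply: eq_bigr => i _.
by case: (i \in D); case: (i != j).
Qed.
Lemma permvec_charvec (s : {perm 'I_n}) (C : {set 'I_n}) :
  permvec s (charvec R C) = charvec R (s @^-1: C).
Proof.
apply/rowP => k; rewrite !mxE inE card_preimset //; exact: perm_inj.
Qed.

Lemma sym_card (Phi : V -> R) :
  (forall x, simplex x -> forall s : {perm 'I_n}, Phi (permvec s x) = Phi x) ->
  forall C C' : {set 'I_n}, C != finset.set0 -> #|C| = #|C'| ->
  Phi (charvec R C) = Phi (charvec R C').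
Proof.
move=> Hsym C C'.
suff H : forall m (C C' : {set 'I_n}), #|C :\: C'| = m -> C != finset.set0 -> #|C| = #|C'| ->
   Phi (charvec R C) = Phi (charvec R C') by apply: H.
elim=> [|m IH] {}C {}C' Hm C0 Hc.
  have sub : C \subset C' by rewrite -finset.setD_eq0 -cards_eq0 Hm.
  by have /eqP -> : C == C' by rewrite eqEcard sub Hc leqnn.
have [i iC] : exists i, i \in C :\: C' by apply/card_gt0P; rewrite Hm.
have [j jC] : exists j, j \in C' :\: C.
  by apply/card_gt0P; rewrite cardsD finset.setIC -Hc -cardsD Hm.
have E1 : #|C :\: C'| = (#|(C :\: C') :\ i|).+1 by rewrite (cardsD1 i) iC.
move: iC jC; rewrite !inE => /andP[iC' iC] /andP[jC jC'].
set C2 := (tperm i j) @^-1: C.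
have E : Phi (charvec R C) = Phi (charvec R C2).
  by rewrite -permvec_charvec Hsym //; exact: charvec_simplex.
have cC2 : #|C2| = #|C| by rewrite card_preimset //; exact: perm_inj.
rewrite E; apply: IH; last by rewrite cC2.
- have -> : C2 :\: C' = (C :\: C') :\ i.
    apply/setP => k; rewrite !inE.
    case: tpermP => [->|->|/eqP ki /eqP kj].
    + by rewrite eqxx /= (negbTE jC) andbF.
    + by rewrite jC' /= andbF.
    + by rewrite ki.
  by move: E1; rewrite Hm => -[].
- by rewrite -card_gt0 cC2 card_gt0.
Qed.
Lemma quad_clique (adj : rel 'I_n) (C : {set 'I_n}) : simple_graph adj -> is_clique adj C ->
  C != finset.set0 ->
  (charvec R C *m adjmx R adj *m (charvec R C)^T) 0 0 = 1 - (#|C|%:R)^-1.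
Proof.
move=> [_ irr] cl C0.
set x := charvec R C.
have E : (x *m adjmx R adj *m x^T) 0 0 = \sum_j \sum_i x 0 i * (adj i j)%:R * x 0 j.
  rewrite !mxE; apply: eq_bigr => j _; rewrite !mxE mulr_suml; apply: eq_bigr => i _.
  by rewrite !mxE.
have term i j : x 0 i * (adj i j)%:R * x 0 j = if i == j then 0 else x 0 i * x 0 j.
  case: eqVneq => [->|ij]; first by rewrite (negbTE (irr j)) mulr0 mul0r.
  rewrite !charvecE; case: (boolP (i \in C)) => iC; case: (boolP (j \in C)) => jC;
    rewrite ?mulr0 ?mul0r //.
  by rewrite (cl i j iC jC ij) mulr1.
have sx : \sum_i x 0 i = 1 by apply: sum_charvec.
rewrite E (eq_bigr (fun j => x 0 j * (1 - x 0 j))); last first.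
  move=> j _; rewrite (eq_bigr _ (fun i _ => term i j)) (bigD1 j) //= eqxx add0r.
  have sj : 1 - x 0 j = \sum_(i | i != j) x 0 i.
    by rewrite -sx (bigD1 j) //= addrAC subrr add0r.
  rewrite sj mulr_sumr; apply: eq_bigr => i ij.
  by rewrite (negbTE ij) mulrC.
under eq_bigr do rewrite mulrBr mulr1.
rewrite sumrB sx; congr (_ - _).
under eq_bigr do rewrite charvecE.
rewrite (eq_bigr (fun j => if j \in C then (#|C|%:R)^-1 * (#|C|%:R)^-1 else 0)); last first.
  by move=> j _; case: ifP; rewrite ?mulr0.
rewrite -big_mkcond /= sumr_const -(mulr_natr ((#|C|%:R)^-1 * (#|C|%:R)^-1)) -mulrA mulVf ?mulr1 //.
by rewrite pnatr_eq0 -lt0n card_gt0.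
Qed.
End Lib.
Section M.
Context {R : realType} {n : nat}.
Notation V := 'rV[R]_n.

Lemma subE (A B : V) i : (A - B) 0 i = A 0 i - B 0 i.
Proof. by rewrite mxE [in LHS]mxE. Qed.

Lemma card_D1 (D : {set 'I_n}) j : j \in D -> #|D :\ j| = #|D|.-1.
Proof. by move=> jD; rewrite (cardsD1 j D) jD. Qed.

Lemma sum_dir (D : {set 'I_n}) i : (2 <= #|D|)%N ->
  \sum_(j in D) (charvec R (D :\ j) 0 i - charvec R D 0 i) = 0.
Proof.
move=> m2.
have m0 : (#|D|%:R : R) != 0 by rewrite pnatr_eq0 -lt0n (leq_trans _ m2).
have k0 : (#|D|.-1%:R : R) != 0 by rewrite pnatr_eq0 -lt0n -ltnS prednK // (leq_trans _ m2).
have ek : (#|D|.-1%:R : R) = #|D|%:R - 1.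
  have m1 : (0 < #|D|)%N by rewrite (leq_trans _ m2).
  by rewrite -[in RHS](prednK m1) -natr1 addrK.
rewrite sumrB; apply/eqP; rewrite subr_eq0; apply/eqP.
rewrite sumr_const charvecE.
case: (boolP (i \in D)) => iD; last first.
  rewrite mul0rn big1 // => j jD; rewrite charvecE in_setD1 (negbTE iD) andbF //.
rewrite -(mulr_natr (#|D|%:R^-1)) mulVf // (bigD1 i) //= charvecE in_setD1 eqxx /= add0r.
rewrite (eq_bigr (fun _ => (#|D|.-1%:R)^-1)); last first.
  move=> j /andP[jD ji]; rewrite charvecE in_setD1 eq_sym ji iD /= card_D1 //.
by rewrite sum_in_neq // -ek mulfV.
Qed.

Lemma sqnorm_dir (D : {set 'I_n}) j : (2 <= #|D|)%N -> j \in D ->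
  sqnorm2 (charvec R (D :\ j) - charvec R D) = ((#|D|.-1%:R) * #|D|%:R)^-1.
Proof.
move=> m2 jD.
have m1 : (0 < #|D|)%N by rewrite (leq_trans _ m2).
have m0 : (#|D|%:R : R) != 0 by rewrite pnatr_eq0 -lt0n.
have k0 : (#|D|.-1%:R : R) != 0 by rewrite pnatr_eq0 -lt0n -ltnS prednK.
have ek : (#|D|.-1%:R : R) = #|D|%:R - 1.
  by rewrite -[in RHS](prednK m1) -natr1 addrK.
rewrite /sqnorm2 (bigD1 j) //= !mxE in_setD1 eqxx jD /=.
rewrite (eq_bigr (fun i => if i \in D then ((#|D|.-1%:R)^-1 - (#|D|%:R)^-1) ^+ 2 else 0)); last first.
  move=> i ij; rewrite !mxE in_setD1 ij /= card_D1 //.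
  by case: (i \in D); rewrite // subrr expr0n.
rewrite sum_ifD // -ek.
move: k0 m0 ek; set k := (#|D|.-1%:R : R); set m := (#|D|%:R : R) => k0 m0 ek.
have -> : m = k + 1 by rewrite ek subrK.
have k10 : k + 1 != 0 by rewrite ek subrK.
by field; rewrite k0 k10.
Qed.

Lemma main_step (Phi : V -> R) (X : set V) :
  open X -> @simplex R n `<=` X -> C2_on Phi X ->
  (forall x, @simplex R n x -> spectral_norm_lt (hessian Phi x) 2) ->
  (forall x, @simplex R n x -> forall s : {perm 'I_n}, Phi (permvec s x) = Phi x) ->
  forall (D C' : {set 'I_n}), (2 <= #|D|)%N -> #|C'| = #|D|.-1 ->
  Phi (charvec R C') - Phi (charvec R D) < ((#|D|.-1%:R) * #|D|%:R)^-1.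
Proof.
move=> oX sX C2 Hspec Hsym D C' m2 cC'.
have m1 : (0 < #|D|)%N by rewrite (leq_trans _ m2).
have D0 : D != finset.set0 by rewrite -card_gt0.
set xD := charvec R D.
set G := fun i => 'D_(ebasis R i) Phi xD.
have step j : j \in D ->
   Phi (charvec R C') - Phi xD - \sum_i (charvec R (D :\ j) - xD) 0 i * G i
     < ((#|D|.-1%:R) * #|D|%:R)^-1.
  move=> jD.
  have cDj : #|D :\ j| = #|D|.-1 by apply: card_D1.
  have Dj0 : D :\ j != finset.set0 by rewrite -card_gt0 cDj -ltnS prednK.
  have -> : Phi (charvec R C') = Phi (charvec R (D :\ j)).
    by apply: sym_card => //; [rewrite -card_gt0 cC' -ltnS prednK | rewrite cDj].
  rewrite -(sqnorm_dir m2 jD).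
  set d := charvec R (D :\ j) - xD.
  have -> : charvec R (D :\ j) = xD + d by rewrite /d addrC subrK.
  have Sd : 0 < sqnorm2 d by rewrite /d sqnorm_dir // invr_gt0 mulr_gt0 // ltr0n // -ltnS prednK.
  have seg (t : R) : 0 <= t <= 1 -> simplex (xD + t *: d).
    by move=> t01; apply: simplex_seg => //; apply: charvec_simplex.
  apply: (Phi_taylor oX C2) => // t t01; first by apply: sX; apply: seg.
  have := hess_bound (Hspec _ (seg t t01)) Sd.
  move=> h; apply: le_lt_trans h; rewrite le_eqVlt; apply/orP; left; apply/eqP.
  apply: eq_bigr => i _; congr (_ * _); apply: eq_bigr => k _; congr (_ * _).
  by rewrite /hessian mxE.
have := ltr_sum (P := mem D) (r := index_enum 'I_n) _ step.
have Z : \sum_(j in D) \sum_i (charvec R (D :\ j) - xD) 0 i * G i = 0.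
  rewrite exchange_big /=; apply: big1 => i _.
  rewrite -mulr_suml (eq_bigr (fun j => charvec R (D :\ j) 0 i - charvec R D 0 i)) ?(sum_dir i m2) ?mul0r //.
  by move=> j _; rewrite subE.
rewrite sumrB Z subr0.
rewrite !sumr_const ltr_pMn2r //.
have /finset.set0Pn [j0 j0D] := D0.
by apply; apply/hasP; exists j0; rewrite ?mem_index_enum.
Qed.
End M.
Unset Implicit Arguments.
Theorem proposition3 (R : realType) (n : nat) (adj : rel 'I_n)
  (Phi : 'rV[R]_n -> R) (X : set 'rV[R]_n) :
  simple_graph adj ->
  open X -> @simplex R n `<=` X -> C2_on Phi X ->
  (forall x, @simplex R n x -> psd (hessian Phi x)) ->
  (forall x, @simplex R n x -> spectral_norm_lt (hessian Phi x) 2) ->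
  (forall x, @simplex R n x -> forall s : {perm 'I_n}, Phi (permvec s x) = Phi x) ->
  forall C1 C2 : {set 'I_n},
    C1 != finset.set0 -> C2 != finset.set0 -> is_clique adj C1 -> is_clique adj C2 ->
    ((#|C1| < #|C2|)%N <->
       fobj adj Phi (@charvec R n C1) < fobj adj Phi (@charvec R n C2)).
Proof.
move=> sg oX sX HC2 _ Hspec Hsym A B A0 B0 clA clB.
pose h (C : {set 'I_n}) := Phi (charvec R C) - (#|C|%:R)^-1.
have fE (C : {set 'I_n}) : C != finset.set0 -> is_clique adj C -> fobj adj Phi (charvec R C) = 1 + h C.
  move=> C0 clC; rewrite /fobj quad_clique // /h; ring.
have hsym (C C' : {set 'I_n}) : C != finset.set0 -> #|C| = #|C'| -> h C = h C'.
  move=> C0 e; rewrite /h e; congr (_ - _); exact: sym_card.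
have step (D C' : {set 'I_n}) : (2 <= #|D|)%N -> #|C'| = #|D|.-1 -> h C' < h D.
  move=> m2 cC'.
  have := main_step oX sX HC2 Hspec Hsym m2 cC'.
  have m1 : (0 < #|D|)%N by rewrite (leq_trans _ m2).
  have ek : (#|D|%:R : R) = #|D|.-1%:R + 1 by rewrite -[in LHS](prednK m1) -natr1.
  have k0 : (#|D|.-1%:R : R) != 0 by rewrite pnatr_eq0 -lt0n -ltnS prednK.
  rewrite /h cC' ek; set k := (#|D|.-1%:R : R).
  have kp : 0 < k by rewrite lt0r k0 ler0n.
  have -> : (k * (k + 1))^-1 = k^-1 - (k + 1)^-1.
    have k10 : k + 1 != 0 by apply: lt0r_neq0; lra.
    by field; rewrite k0 k10.
  lra.
have chain : forall m (D C1 : {set 'I_n}), #|D| = m -> C1 != finset.set0 -> (#|C1| < m)%N -> h C1 < h D.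
  elim=> [|m IH] D C1 cD C10 lt; first by rewrite ltn0 in lt.
  have [j jD] : exists j, j \in D by apply/card_gt0P; rewrite cD.
  have cC' : #|D :\ j| = m by rewrite card_D1 // cD.
  have c1 : (0 < #|C1|)%N by rewrite card_gt0.
  have m0 : (0 < m)%N by rewrite -ltnS (leq_trans _ lt).
  have st : h (D :\ j) < h D by apply: step; rewrite ?cD ?cC' //.
  case: (ltngtP #|C1| m) => c.
  - apply: lt_trans st; apply: IH => //; by rewrite -card_gt0 cC'.
  - by rewrite ltnS leqNgt c in lt.
  - by rewrite (hsym C1 (D :\ j)) // cC'.
rewrite (fE A) // (fE B) // ltrD2l; split.
  by move=> lt; apply: chain.
move=> hlt; case: (ltngtP #|A| #|B|) => // c.
- have := chain _ A B (erefl _) B0 c; lra.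
- by move: hlt; rewrite (hsym A B) // ltxx.
Qed.
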